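(* Let $(H,L_H)$ be a right-resolving labeled graph presenting $Y=L_H(X_H)$, and let $x\in X_H$. Then $L_H : \mathbb U(x) \to \mathbb U(L_H(x))$ is surjective if and only if $$\{ L_H(\mu) : \mu \in X_H[0,\infty),\ s_H(\mu) = t_H(x_{(-\infty, k]})\} = \{ y \in Y[0,\infty): L_H(x_{(-\infty,k]})y \in Y \}$$ holds for all $k \in \mathbb Z$.
   Context: A labeled graph $(H,L_H)$: finite directed graph (vertices $V_H$, edges $E_H$, source/terminal maps $s_H,t_H$) without sinks or sources, labeling $L_H:E_H\to A$, edge shift $X_H$; $L_H$ acts coordinatewise on paths. $X_H[0,\infty)$ denotes right-infinite paths $e_0e_1\cdots$ and $s_H$ of such a path is the source of its first edge; $x_{(-\infty,k]}=\cdots x_{k-1}x_k$ and $t_H$ of it is the terminal vertex of $x_k$; $Y[0,\infty)=\{y_{[0,\infty)}:y\in Y\}$. Right-resolving: distinct edges with the same source have distinct labels. For a subshift $X$ and $x\in X$, $\mathbb U(x)=\{z\in X:\exists N\in\mathbb Z\ \forall i\le N,\ z_i=x_i\}$. *)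

(* Defs.v *)
From mathcomp Require Import all_boot all_order all_algebra.
Set Implicit Arguments. Unset Strict Implicit. Unset Printing Implicit Defensive.
Import Order.TTheory GRing.Theory Num.Theory.
Local Open Scope ring_scope.

Section LabeledGraphs.
Variables (V E : finType) (A : Type) (s t : E -> V) (L : E -> A).

Definition no_sinks_sources : Prop :=
  forall v : V, (exists e, s e = v) /\ (exists e, t e = v).

Definition right_resolving : Prop :=
  forall e f : E, s e = s f -> L e = L f -> e = f.

Definition edge_shift (x : int -> E) : Prop :=
  forall i : int, t (x i) = s (x (i + 1)).

Definition right_path (m : nat -> E) : Prop :=
  forall n : nat, t (m n) = s (m n.+1).

Definition label_shift (y : int -> A) : Prop :=
  exists x, edge_shift x /\ forall i : int, y i = L (x i).
End LabeledGraphs.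

Definition right_half (T : Type) (Z : (int -> T) -> Prop) (w : nat -> T) : Prop :=
  exists z, Z z /\ forall n : nat, w n = z (n%:Z).

Definition unstable_set (T : Type) (X : (int -> T) -> Prop) (x z : int -> T) : Prop :=
  X z /\ exists N : int, forall i : int, (i <= N)%R -> z i = x i.

(* the concatenation u_(-oo,k] w, placed so that u occupies positions <= k
   and w_n sits at position k+1+n *)
Definition left_concat (T : Type) (u : int -> T) (k : int) (w : nat -> T) : int -> T :=
  fun i => if (i <= k)%R then u i else w (absz (i - (k + 1))%R).

(* Main.v *)
Require Import Defs.
From mathcomp Require Import all_boot all_order all_algebra.
From mathcomp Require Import zify.
Import Order.TTheory GRing.Theory Num.Theory.
Local Open Scope ring_scope.

Lemma t1 (k i : int) : k < i -> i = k + 1 + Posz (absz (i - (k+1))%R).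
Proof. lia. Qed.
Lemma t2 (k : int) (n : nat) : absz (k + 1 + n%:Z - (k+1))%R = n.
Proof. lia. Qed.
Lemma t3 (k : int) (n : nat) : (k + 1 + n%:Z <= k) = false.
Proof. lia. Qed.

Lemma lc_le (T : Type) (u : int -> T) k w i : i <= k -> left_concat u k w i = u i.
Proof. by rewrite /left_concat => ->. Qed.

Lemma lc_gt (T : Type) (u : int -> T) k w (n : nat) :
  left_concat u k w (k + 1 + n%:Z) = w n.
Proof. by rewrite /left_concat t3 t2. Qed.

Lemma lc_ngt (T : Type) (u : int -> T) k (w : int -> T) i :
  k < i -> left_concat u k (fun n => w (k + 1 + n%:Z)) i = w i.
Proof. by move=> h; rewrite /left_concat leNgt h /= -t1. Qed.

Lemma shift_edge (V E : finType) (s t : E -> V) (x : int -> E) c :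
  edge_shift s t x -> edge_shift s t (fun i => x (i + c)).
Proof. by move=> H i; rewrite H addrAC. Qed.

Lemma concat_edge (V E : finType) (s t : E -> V) (x : int -> E) k mu :
  edge_shift s t x -> right_path s t mu -> s (mu 0%N) = t (x k) ->
  edge_shift s t (left_concat x k mu).
Proof.
move=> Ex Pm S0 i.
case: (ltgtP i k) => [lt|gt|eq].
- by rewrite !lc_le ?Ex //; [lia|lia].
- rewrite (t1 _ _ gt); move: (absz _) => n.
  have -> : k + 1 + n%:Z + 1 = k + 1 + (n.+1)%:Z by lia.
  by rewrite !lc_gt Pm.
- subst i; rewrite lc_le //.
  have -> : k + 1 = k + 1 + (0%N)%:Z by rewrite addr0.
  by rewrite lc_gt.
Qed.

Arguments concat_edge {V E s t x k mu}.
Arguments shift_edge {V E s t x c}.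
Arguments lc_le {T u k w i}.
Arguments lc_ngt {T u k w i}.

Theorem lemma2p5 (V E : finType) (A : Type) (s t : E -> V) (L : E -> A)
  (x : int -> E) :
  no_sinks_sources s t ->
  right_resolving s L ->
  edge_shift s t x ->
  ((* L_H : U(x) -> U(L_H(x)) is surjective *)
   (forall w : int -> A,
      unstable_set (label_shift s t L) (fun i => L (x i)) w ->
      exists z : int -> E,
        unstable_set (edge_shift s t) x z /\ forall i : int, L (z i) = w i)
   <->
   (forall k : int, forall w : nat -> A,
      (exists mu : nat -> E,
         right_path s t mu /\ s (mu 0%N) = t (x k) /\
         forall n : nat, L (mu n) = w n)
      <->
      (right_half (label_shift s t L) w /\
       label_shift s t L (left_concat (fun i => L (x i)) k w)))).
Proof.
move=> _ RR Ex.
have dir1 : forall k (w : nat -> A),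
   (exists mu : nat -> E,
         right_path s t mu /\ s (mu 0%N) = t (x k) /\
         forall n : nat, L (mu n) = w n) ->
      (right_half (label_shift s t L) w /\
       label_shift s t L (left_concat (fun i => L (x i)) k w)).
  move=> k w [mu [Pm [S0 Lm]]].
  have Ez := concat_edge Ex Pm S0.
  split.
    exists (fun i => L (left_concat x k mu (i + (k + 1)))); split.
      exists (fun i => left_concat x k mu (i + (k + 1))); split => //.
      exact: shift_edge.
    by move=> n; rewrite addrC lc_gt Lm.
  exists (left_concat x k mu); split => // i.
  by rewrite /left_concat; case: ifP.
split.
- move=> Surj k w; split; first exact: dir1.
  move=> [_ Hy].
  have [|z [[Ez [N HN]] Lz]] := Surj (left_concat (fun i => L (x i)) k w).
    by split => //; exists k => i hi; rewrite lc_le.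
  have Zx : forall i, i <= k -> z i = x i.
    have ind : forall n : nat, N + n%:Z <= k -> z (N + n%:Z) = x (N + n%:Z).
      elim => [|n IH] h; first by rewrite addr0 HN.
      have -> : N + (n.+1)%:Z = N + n%:Z + 1 by lia.
      apply: RR.
        by rewrite -Ex -Ez IH //; lia.
      rewrite Lz lc_le //; lia.
    move=> i hi; case: (lerP i N) => hN; first exact: HN.
    have -> : i = N + (absz (i - N)%R)%:Z by lia.
    apply: ind; lia.
  exists (fun n => z (k + 1 + n%:Z)); split; last split.
  + move=> n; rewrite Ez.
    by have -> : k + 1 + n%:Z + 1 = k + 1 + (n.+1)%:Z by lia.
  + by rewrite addr0 -Ez Zx.
  + by move=> n; rewrite Lz lc_gt.
- move=> Cond w [[y [Ey Hy]] [N HN]].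
  set w' := fun n : nat => w (N + 1 + n%:Z).
  have [mu [Pm [S0 Lm]]] : exists mu : nat -> E,
         right_path s t mu /\ s (mu 0%N) = t (x N) /\
         forall n : nat, L (mu n) = w' n.
    apply/Cond; split.
      exists (fun i => w (i + (N + 1))); split.
        exists (fun i => y (i + (N + 1))); split; first exact: shift_edge.
        by move=> i; rewrite Hy.
      by move=> n; rewrite /w' addrC.
    exists y; split => // i.
    case: (lerP i N) => h; first by rewrite lc_le // -Hy HN.
    by rewrite lc_ngt // Hy.
  exists (left_concat x N mu); split.
    split; first exact: concat_edge.
    by exists N => i hi; rewrite lc_le.
  move=> i; case: (lerP i N) => h; first by rewrite lc_le // HN.
  have -> : left_concat x N mu i = left_concat x N mu (N + 1 + (absz (i - (N+1))%R)%:Z).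
    by rewrite -t1.
  by rewrite lc_gt Lm /w' -t1.
Qed.
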